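(* For all positive integers $n$ and $k$ with $k\equiv1\pmod 3$, $$\det\big(M_{n+i+j}^{(k)}\big)_{0\le i,j\le k-1}=(-1)^{n\lfloor (k+1)/3\rfloor}\Big(\frac{2k+4}{3}\Big)^{n-1}.$$
   Context: $M_N^{(k)}$ is the number of lattice paths from $(0,0)$ to $(N,0)$ with steps $(1,1)$, $(1,0)$, $(1,-1)$ that never go below the $x$-axis and never go above the line $y=k$ (bounded Motzkin paths). *)

(* Defs.v *)
From mathcomp Require Import all_boot all_order all_algebra.
Set Implicit Arguments. Unset Strict Implicit. Unset Printing Implicit Defensive.
Import Order.TTheory GRing.Theory Num.Theory.
Local Open Scope ring_scope.

(* A step is encoded by s : 'I_3, with s = 0,1,2 meaning (1,-1),(1,0),(1,1). *)
Definition step_dy (s : 'I_3) : int := (nat_of_ord s)%:Z - 1.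

Definition heights (ss : seq 'I_3) : seq int :=
  scanl (fun y s => y + step_dy s) 0 ss.

Definition bounded_motzkin (k : nat) (ss : seq 'I_3) : bool :=
  (foldl (fun y s => y + step_dy s) 0 ss == 0) &&
  all (fun y => (0 <= y) && (y <= k%:Z)) (heights ss).

Definition motzkin_bounded (k N : nat) : nat :=
  #|[set t : N.-tuple 'I_3 | bounded_motzkin k t]|.

(* Main.v *)
Require Import Defs.
From mathcomp Require Import all_boot all_order all_algebra zify ring.
Set Implicit Arguments. Unset Strict Implicit. Unset Printing Implicit Defensive.
Import Order.TTheory GRing.Theory Num.Theory.
Local Open Scope ring_scope.

Definition tri m : 'M[int]_m := \matrix_(i, j) (((i <= j.+1) && (j <= i.+1))%N)%:R.

Lemma sum_delta n (F : 'I_n -> int) x (hx : (x < n)%N) :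
  \sum_(b < n) F b * ((b : nat) == x)%:R = F (Ordinal hx).
Proof.
rewrite (bigD1 (Ordinal hx)) //= eqxx mulr1 big1 ?addr0 // => b hb.
suff /negbTE -> : (b : nat) != x by rewrite mulr0.
by apply: contra hb => /eqP e; apply/eqP/val_inj.
Qed.

Lemma sum_eqn n (G : nat -> int) x :
  \sum_(b < n) ((b : nat) == x)%:R * G b = (x < n)%N%:R * G x.
Proof.
case: (ltnP x n) => h.
  rewrite (eq_bigr (fun b : 'I_n => G b * ((b:nat) == x)%:R)) ?sum_delta ?mul1r //.
  by move=> b _; rewrite mulrC.
rewrite big1 ?mul0r // => b _.
suff /negbTE -> : (b : nat) != x by rewrite mul0r.
by have := ltn_ord b; lia.
Qed.

Lemma tri_split (a c : nat) :
  (((a <= c.+1) && (c <= a.+1))%N)%:R =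
  ((c.+1 == a)%N)%:R + ((c == a)%N)%:R + ((c == a.+1)%N)%:R :> int.
Proof.
case h1: (a <= c.+1)%N; case h2: (c <= a.+1)%N;
case h3: (c.+1 == a)%N; case h4: (c == a)%N; case h5: (c == a.+1)%N => //=; lia.
Qed.

Lemma sum_tri n (G : nat -> int) (a : nat) :
  \sum_(c < n) (((a <= c.+1) && (c <= a.+1))%N)%:R * G c =
  (if a is a'.+1 then (a' < n)%N%:R * G a' else 0)
  + (a < n)%N%:R * G a + (a.+1 < n)%N%:R * G a.+1.
Proof.
rewrite (eq_bigr (fun c : 'I_n => (0 < a)%N%:R * (((c : nat) == a.-1)%:R * G c) +
   ((c:nat) == a)%:R * G c + ((c:nat) == a.+1)%:R * G c)).
  rewrite !big_split /= -mulr_sumr !sum_eqn; case: a => [|a] /=.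
    by rewrite !mul0r add0r.
  by rewrite mul1r.
move=> c _; rewrite tri_split !mulrDl; congr (_ + _ + _).
by case: a => [|a] //=; rewrite ?mul0r ?mul1r ?eqSS.
Qed.

Definition zf (x : nat) : int := match (x %% 3)%N with 0 => 1 | 1 => -1 | _ => 0 end.

Lemma zf_mod x : zf x = zf (x %% 3).
Proof. by rewrite /zf modn_mod. Qed.

Lemma zf3 x : zf x + zf x.+1 + zf x.+2 = 0.
Proof.
have e1 : (x.+1 %% 3 = (x %% 3 + 1) %% 3)%N by rewrite modnDml addn1.
have e2 : (x.+2 %% 3 = (x %% 3 + 2) %% 3)%N by rewrite modnDml addn2.
rewrite (zf_mod x) (zf_mod x.+1) (zf_mod x.+2) e1 e2.
by case: (x %% 3)%N (ltn_pmod x (isT : (0 < 3)%N)) => [|[|[|r]]].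
Qed.

Lemma Az k (hk : (k %% 3 = 1)%N) (a : 'I_k.+1) :
  \sum_(c < k.+1) tri k.+1 a c * zf c = 0.
Proof.
have k0 : (0 < k)%N by move: hk; case: (k).
rewrite (eq_bigr (fun c : 'I_k.+1 => (((a <= c.+1) && (c <= a.+1))%N)%:R * zf c)); last first.
  by move=> c _; rewrite mxE.
rewrite sum_tri ltn_ord mul1r.
case: a => [[|a] ha] /=.
  by rewrite ltnS k0 mul1r add0r.
rewrite (ltn_trans _ ha) // mul1r.
have -> : (a.+2 < k.+1)%N%:R * zf a.+2 = zf a.+2.
  case: ltnP => h; rewrite ?mul1r // mul0r.
  have -> : a.+2 = k.+1 by lia.
  have e : (k.+1 %% 3 = (k %% 3 + 1) %% 3)%N by rewrite modnDml addn1.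
  by rewrite zf_mod e hk.
exact: zf3.
Qed.

Definition Jm k : 'M[int]_(k.+1, k) := \matrix_(a, r) ((a : nat) == r)%:R.
Definition Km k : 'M[int]_(k, k.+1) :=
  \matrix_(r, a) (((a : nat) == r)%:R + ((a : nat) == k)%:R * zf r).

Lemma MJ k m (M : 'M[int]_(m, k.+1)) :
  M *m Jm k = \matrix_(a, r) M a (widen_ord (leqnSn k) r).
Proof.
apply/matrixP => a r; rewrite !mxE.
rewrite (eq_bigr (fun b => M a b * ((b:nat) == r)%:R)); last by move=> b _; rewrite mxE.
by rewrite (sum_delta _ (ltn_trans (ltn_ord r) (ltnSn k))); congr (M a _); apply: val_inj.
Qed.

Lemma AJK k (hk : (k %% 3 = 1)%N) : tri k.+1 *m Jm k *m Km k = tri k.+1.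
Proof.
rewrite MJ; apply/matrixP => a b; rewrite [LHS]mxE.
rewrite (eq_bigr (fun r : 'I_k => tri k.+1 a (widen_ord (leqnSn k) r) *
   (((b : nat) == r)%:R + ((b : nat) == k)%:R * zf r))); last by move=> r _; rewrite !mxE.
case: (unliftP ord_max b) => [b' ->|->].
  rewrite (eq_bigr (fun r : 'I_k => tri k.+1 a (widen_ord (leqnSn k) r) * ((r : nat) == b')%:R)).
    have hb := ltn_ord b'; rewrite sum_delta !mxE /= /bump (_ : (k <= b')%N = false) //; lia.
  move=> r _; rewrite lift_max (eq_sym (b' : nat)) (_ : ((b' : nat) == k) = false).
    by rewrite mul0r addr0.
  by apply/negbTE; rewrite neq_ltn ltn_ord.
have := Az hk a; rewrite big_ord_recr /=.
have -> : zf k = -1 by rewrite zf_mod hk.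
rewrite mulrN1 => /eqP; rewrite subr_eq0 => /eqP <-.
apply: eq_bigr => r _; rewrite eqxx mul1r.
rewrite (_ : (k == r) = false) ?add0r //.
by apply/negbTE; rewrite eq_sym neq_ltn ltn_ord.
Qed.

Lemma KJ k : Km k *m Jm k = 1%:M.
Proof.
rewrite MJ; apply/matrixP => r s; rewrite !mxE /=.
rewrite (_ : (s == k :> nat) = false); last by apply/negbTE; rewrite neq_ltn ltn_ord.
by rewrite mul0r addr0 eq_sym.
Qed.

Lemma tri_tr m : (tri m)^T = tri m.
Proof. by apply/matrixP => i j; rewrite !mxE andbC. Qed.

Lemma triX_tr m j : ((tri m.+1) ^+ j)^T = (tri m.+1) ^+ j.
Proof.
elim: j => [|j IH]; first by rewrite expr0 trmx1.
by rewrite exprS -mulmxE trmx_mul IH tri_tr mulmxE -exprSr -exprS.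
Qed.

Definition Tm k m : 'M[int]_k := (Jm k)^T *m (tri k.+1) ^+ m *m Jm k.

Lemma AmP k (hk : (k %% 3 = 1)%N) m :
  (tri k.+1) ^+ m.+1 *m (Jm k *m Km k) = (tri k.+1) ^+ m.+1.
Proof. by rewrite exprSr -mulmxE -mulmxA (mulmxA (tri k.+1)) AJK. Qed.

Lemma PAm k (hk : (k %% 3 = 1)%N) m :
  (Jm k *m Km k)^T *m (tri k.+1) ^+ m.+1 = (tri k.+1) ^+ m.+1.
Proof. by rewrite -{1}triX_tr -trmx_mul AmP // triX_tr. Qed.

Lemma Adecomp k (hk : (k %% 3 = 1)%N) m :
  (tri k.+1) ^+ m.+1 = (Km k)^T *m Tm k m.+1 *m Km k.
Proof.
rewrite -{1}(PAm hk) -{1}(AmP hk) /Tm trmx_mul !mulmxA //.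
Qed.

Lemma Trec k (hk : (k %% 3 = 1)%N) m :
  Tm k m.+2 = Tm k m.+1 *m (Km k *m (Km k)^T) *m Tm k 1.
Proof.
rewrite {1}/Tm exprSr -{2}(expr1 (tri k.+1)) (Adecomp hk m) (Adecomp hk 0) -!mulmxE.
rewrite !mulmxA -trmx_mul KJ trmx1 mul1mx -mulmxA KJ mulmx1.
by [].
Qed.

Lemma JtM k m (M : 'M[int]_(k.+1, m)) :
  (Jm k)^T *m M = \matrix_(r, b) M (widen_ord (leqnSn k) r) b.
Proof.
apply/matrixP => r b; rewrite !mxE.
rewrite (eq_bigr (fun a => M a b * ((a:nat) == r)%:R)); last by move=> a _; rewrite !mxE mulrC.
by rewrite (sum_delta _ (ltn_trans (ltn_ord r) (ltnSn k))); congr (M _ b); apply: val_inj.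
Qed.

Lemma T1 k : Tm k 1 = tri k.
Proof. by rewrite /Tm expr1 JtM MJ; apply/matrixP => r s; rewrite !mxE. Qed.

Definition zc k : 'cV[int]_k := \col_r zf r.

Lemma KKt k : Km k *m (Km k)^T = 1%:M + zc k *m (zc k)^T.
Proof.
apply/matrixP => r s; rewrite !mxE big_ord_recr /= big_ord1 !mxE /= eqxx.
rewrite (_ : (k == r) = false); last by apply/negbTE; rewrite eq_sym neq_ltn ltn_ord.
rewrite (_ : (k == s) = false); last by apply/negbTE; rewrite eq_sym neq_ltn ltn_ord.
rewrite !add0r !mul1r; congr (_ + _).
rewrite (eq_bigr (fun a : 'I_k => ((a : nat) == r)%:R * ((a : nat) == s)%:R)).
  by rewrite (sum_delta _ (ltn_ord s)) /= eq_sym.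
move=> a _; rewrite !mxE /=.
rewrite (_ : (a == k :> nat) = false); last by apply/negbTE; rewrite neq_ltn ltn_ord.
by rewrite !mul0r !addr0.
Qed.

Lemma triX_low k j (r : 'I_k.+1) : (j < r)%N -> ((tri k.+1) ^+ j) r ord0 = 0.
Proof.
elim: j r => [|j IH] r hr.
  by rewrite expr0 mxE; case: r hr => [[|r] ?].
rewrite exprS -mulmxE mxE big1 // => c _.
case: (ltnP j c) => h; first by rewrite IH // mulr0.
rewrite mxE (_ : _ && _ = false) ?mul0r //; lia.
Qed.

Lemma triX_diag k j (hj : (j < k.+1)%N) : ((tri k.+1) ^+ j) (Ordinal hj) ord0 = 1.
Proof.
elim: j hj => [|j IH] hj; first by rewrite expr0 mxE.
have hj' : (j < k.+1)%N by apply: ltnW.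
rewrite exprS -mulmxE mxE (bigD1 (Ordinal hj')) //= IH mulr1 mxE /=.
rewrite ltnSn (leqW (leqnSn j)) big1 ?addr0 // => c hc.
have hc' : (c : nat) != j by apply: contra hc => /eqP e; apply/eqP/val_inj.
case: (ltnP j c) => h; first by rewrite triX_low // mulr0.
rewrite mxE /= (_ : _ && _ = false) ?mul0r //; lia.
Qed.

Definition Vm k : 'M[int]_(k.+1, k) := \matrix_(r, j) ((tri k.+1) ^+ j) r ord0.
Definition Um k : 'M[int]_k := \matrix_(r, j) ((tri k.+1) ^+ j) (widen_ord (leqnSn k) r) ord0.

Lemma VJU k : Vm k = Jm k *m Um k.
Proof.
apply/matrixP => a j; rewrite !mxE.
rewrite (eq_bigr (fun r => Um k r j * ((r : nat) == a)%:R)); last first.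
  by move=> r _; rewrite !mxE mulrC eq_sym.
case: (unliftP ord_max a) => [b ->|->].
  rewrite lift_max (sum_delta _ (ltn_ord b)) mxE; congr (_ _ ord0); apply: val_inj.
  exact: lift_max.
rewrite triX_low //= big1 // => r _.
by rewrite (_ : (r == k :> nat) = false) ?mulr0 //; apply/negbTE; rewrite neq_ltn ltn_ord.
Qed.

Lemma detU k : \det (Um k) = 1.
Proof.
rewrite -det_tr det_trig; last first.
  apply/forallP => i; apply/forallP => j; apply/implyP => h.
  by rewrite !mxE triX_low.
rewrite big1 // => i _; rewrite !mxE.
have h : (i < k.+1)%N by apply: ltn_trans (ltn_ord i) _.
by rewrite -(triX_diag h); congr (_ _ ord0); apply: val_inj.
Qed.

Lemma Hankel_entry k (M : 'M[int]_k.+1) i j :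
  ((Vm k)^T *m M *m Vm k) i j = ((tri k.+1) ^+ i *m M *m (tri k.+1) ^+ j) ord0 ord0.
Proof.
rewrite !mxE; apply: eq_bigr => s _; rewrite !mxE; congr (_ * _).
apply: eq_bigr => r _; rewrite !mxE; congr (_ * _).
by rewrite -[in RHS]triX_tr mxE.
Qed.

Lemma card_tuple_count (T : finType) (P : pred (seq T)) n (L : seq (seq T)) :
  uniq L -> (forall x, (x \in L) = (size x == n)) ->
  #|[set t : n.-tuple T | P t]| = count P L.
Proof.
move=> uL mL.
rewrite cardsE cardE /enum_mem size_filter -enumT.
rewrite (eq_count (a2 := preim val P)) // -count_map.
apply: (permP _).
apply: uniq_perm => //.
  by rewrite (map_inj_uniq val_inj) enum_uniq.
move=> x; rewrite mL; apply/mapP/idP => [[t _ ->]|hx].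
  by rewrite size_tuple.
by exists (Tuple hx); rewrite ?mem_enum.
Qed.

Definition s0 : 'I_3 := @Ordinal 3 0 isT.
Definition s1 : 'I_3 := @Ordinal 3 1 isT.
Definition s2 : 'I_3 := @Ordinal 3 2 isT.

Fixpoint allseqs N : seq (seq 'I_3) :=
  if N is N'.+1 then
    [seq s0 :: t | t <- allseqs N'] ++ [seq s1 :: t | t <- allseqs N'] ++
    [seq s2 :: t | t <- allseqs N']
  else [:: [::]].

Lemma mem_cons_map (s s' : 'I_3) t (A : seq (seq 'I_3)) :
  (s :: t \in [seq s' :: u | u <- A]) = (s == s') && (t \in A).
Proof.
apply/mapP/andP => [[u hu [-> ->]]|[/eqP -> ht]]; first by rewrite eqxx.
by exists t.
Qed.

Lemma nil_map (s' : 'I_3) (A : seq (seq 'I_3)) :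
  ([::] \in [seq s' :: u | u <- A]) = false.
Proof. by apply/mapP => [[u _]]. Qed.

Lemma mem_allseqs N x : (x \in allseqs N) = (size x == N).
Proof.
elim: N x => [|N IH] [|s t] //=; rewrite ?inE //.
  by rewrite !mem_cat !nil_map.
rewrite !mem_cat !mem_cons_map IH eqSS.
by case: s => [[|[|[|s]]] hs] //=; rewrite ?andbF ?orbF //.
Qed.

Lemma uniq_allseqs N : uniq (allseqs N).
Proof.
elim: N => [|N IH] //=.
have um : forall s', uniq [seq s' :: u | u <- allseqs N].
  by move=> s'; rewrite map_inj_uniq // => u v [].
rewrite !cat_uniq !um /= andbT.
rewrite has_cat !negb_or !has_map.
by rewrite -!all_predC; apply/andP; split; [apply/andP; split|];
  apply/allP => u _ /=; rewrite mem_cons_map.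
Qed.

Definition inr k (y : int) : bool := (0 <= y) && (y <= k%:Z).
Definition Qp k (a b : int) (ss : seq 'I_3) : bool :=
  (foldl (fun y s => y + step_dy s) a ss == b) &&
  all (fun y => (0 <= y) && (y <= k%:Z)) (scanl (fun y s => y + step_dy s) a ss).

Lemma Qp_cons k a b s t :
  Qp k a b (s :: t) = inr k (a + step_dy s) && Qp k (a + step_dy s) b t.
Proof. by rewrite /Qp /= andbCA. Qed.

Definition fc k N (a b : int) : nat := count (Qp k a b) (allseqs N).

Lemma count_andl (T : Type) (c : bool) (p : pred T) s :
  count (fun t => c && p t) s = (c * count p s)%N.
Proof. by case: c; rewrite ?mul1n ?mul0n //= count_pred0. Qed.

Lemma fc_S k N a b :
  fc k N.+1 a b = (inr k (a - 1) * fc k N (a - 1) b + inr k a * fc k N a b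
                  + inr k (a + 1) * fc k N (a + 1) b)%N.
Proof.
rewrite /fc [allseqs _.+1]/= !count_cat !count_map.
under eq_count => t do rewrite /= Qp_cons.
under [X in (_ + (X + _))%N]eq_count => t do rewrite /= Qp_cons.
under [X in (_ + (_ + X))%N]eq_count => t do rewrite /= Qp_cons.
rewrite !count_andl addnA.
have -> : a + step_dy s1 = a by rewrite /step_dy /= subrr addr0.
by [].
Qed.

Lemma fc_A k N (i j : 'I_k.+1) :
  (fc k N i j)%:R = ((tri k.+1) ^+ N) i j :> int.
Proof.
elim: N i => [|N IH] i.
  rewrite /fc /= /Qp /= expr0 mxE addn0 andbT.
  by congr (_ %:R); apply/eqP/eqP => [/eqP|->] //; rewrite -!val_eqE /= => /eqP ->.
rewrite fc_S exprS -mulmxE mxE.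
rewrite (eq_bigr (fun c : 'I_k.+1 => (((i <= c.+1) && (c <= i.+1))%N)%:R *
   (fun x : nat => (fc k N x j)%:R : int) c)); last first.
  by move=> c _; rewrite IH mxE.
rewrite (sum_tri _ (fun x : nat => (fc k N x j)%:R)) ltn_ord mul1r !natrD !natrM.
have hi := ltn_ord i.
have e1 : inr k (i : nat)%:Z by rewrite /inr lez_nat -ltnS hi.
have e2 : inr k ((i : nat)%:Z + 1) = (i.+1 < k.+1)%N by rewrite /inr -(PoszD (i : nat) 1%N) addn1 lez_nat.
rewrite e1 e2 mul1r; congr (_ + _ + _).
case: (nat_of_ord i) hi => [|i'] hi' /=.
  by rewrite /inr /= mul0r.
have -> : (Posz i'.+1 - 1) = Posz i' by rewrite -addn1 PoszD addrK.
by rewrite /inr lez_nat (_ : (0 <= Posz i') = true).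
have -> : ((i : nat)%:Z + 1) = (i.+1 : nat)%:Z by rewrite -(addn1 i) PoszD.
by [].
Qed.

Lemma motzkin_A k N :
  (motzkin_bounded k N)%:R = ((tri k.+1) ^+ N) ord0 ord0 :> int.
Proof.
rewrite /motzkin_bounded (card_tuple_count _ (uniq_allseqs N)); last exact: mem_allseqs.
rewrite -(@fc_A k N ord0 ord0) /fc; congr (_ %:R); exact: eq_count.
Qed.

Lemma det_tri_rec m : \det (tri m.+2) = \det (tri m.+1) - \det (tri m).
Proof.
rewrite (expand_det_row _ ord_max) !big_ord_recr /= big1 => [|j _]; last first.
  rewrite !mxE /=.
  have /negbTE -> : ~~ (m.+1 <= j.+1)%N by have := ltn_ord j; lia.
  by rewrite mul0r.
rewrite !mxE /= !leqnn ltnW // leqnSn /= !mul1r add0r.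
have -> : cofactor (tri m.+2) ord_max ord_max = \det (tri m.+1).
  rewrite /cofactor /= addnn -signr_odd odd_double expr0 mul1r.
  congr (\det _); apply/matrixP => i j; rewrite !mxE !lift_max //.
have -> : cofactor (tri m.+2) ord_max (widen_ord (leqnSn m.+1) ord_max)
   = - \det (tri m).
  rewrite /cofactor /= addSn addnn -signr_odd /= odd_double /= expr1 mulN1r.
  congr (- _).
  rewrite (expand_det_col _ ord_max) big_ord_recr /= big1 => [|i _]; last first.
    rewrite !mxE /= /bump /=.
    by rewrite (_ : _ && _ = false) ?mul0r //; have := ltn_ord i; lia.
  rewrite !mxE /= /bump /= (_ : _ && _ = true) ?mul1r ?add0r; last by lia.
  rewrite /cofactor /= addnn -signr_odd odd_double expr0 mul1r.
  congr (\det _); apply/matrixP => i j; rewrite !mxE /= /bump /=.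
  have := ltn_ord i; have := ltn_ord j.
  move=> hj hi; congr (_ %:R); lia.
by rewrite addrC.
Qed.

Lemma det_tri q : \det (tri (q * 3 + 1)) = (-1) ^+ q.
Proof.
elim: q => [|q IH].
  by rewrite mul0n add0n det_mx11 mxE.
have -> : (q.+1 * 3 + 1 = (q * 3 + 1).+3)%N by lia.
rewrite det_tri_rec det_tri_rec IH exprS; ring.
Qed.

Lemma det_rank1 n (u v : 'cV[int]_n) :
  \det (1%:M + u *m v^T) = 1 + (v^T *m u) 0 0.
Proof.
pose L : 'M[int]_(n + 1) := block_mx 1%:M 0 v^T 1%:M.
pose M : 'M[int]_(n + 1) := block_mx (1%:M + u *m v^T) u 0 1%:M.
pose R : 'M[int]_(n + 1) := block_mx 1%:M 0 (- v^T) 1%:M.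
have E : L *m M *m R = block_mx 1%:M u 0 (1%:M + v^T *m u).
  rewrite /L /M /R !mulmx_block !mul1mx !mul0mx !mulmx0 !mulmx1 !addr0 !add0r.
  rewrite !mulmxN !mulmxDr !mulmxDl !mulmx1 !mulmxA !mul1mx.
  by rewrite addrK [v^T *m u + _]addrC opprD addrA addrK subrr.
have := congr1 determinant E.
rewrite !det_mulmx /L /M /R det_lblock det_ublock det_lblock det_ublock !det1 !mulr1 !mul1r.
by move->; rewrite det_mx11 !mxE eqxx mulr1n.
Qed.

Lemma zfq q c : zf (q * 3 + c) = zf c.
Proof. by rewrite zf_mod modnMDl -zf_mod. Qed.

Lemma sum_zf2 q : \sum_(r < q * 3 + 1) zf r * zf r = (q * 2 + 1)%:R.
Proof.
elim: q => [|q IH]; first by rewrite big_ord1.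
have -> : (q.+1 * 3 + 1 = (q * 3 + 1).+3)%N by lia.
rewrite !big_ord_recr /= IH -!addnS !zfq.
have -> : (q.+1 * 2 + 1 = (q * 2 + 1) + 2)%N by lia.
have z1 : zf 1 = -1 by [].
have z2 : zf 2 = 0 by [].
have z3 : zf 3 = 1 by [].
rewrite z1 z2 z3 !natrD; ring.
Qed.

Lemma detT q m :
  \det (Tm (q * 3 + 1) m.+1) = (-1) ^+ (q * m.+1) * ((q * 2 + 2)%:R) ^+ m.
Proof.
have hk : ((q * 3 + 1) %% 3 = 1)%N by rewrite modnMDl.
elim: m => [|m IH].
  by rewrite T1 det_tri muln1 expr0 mulr1.
rewrite Trec // !det_mulmx IH T1 det_tri KKt det_rank1.
have -> : ((zc (q * 3 + 1))^T *m zc (q * 3 + 1)) 0 0 = (q * 2 + 1)%:R.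
  rewrite mxE -sum_zf2; apply: eq_bigr => r _; rewrite !mxE //.
have -> : (1 + (q * 2 + 1)%:R : int) = (q * 2 + 2)%:R.
  rewrite !natrD; ring.
rewrite (mulnS q m.+1) exprD exprS; ring.
Qed.

Unset Implicit Arguments.
Set Strict Implicit.

Theorem theorem54 (n k : nat) (hn : (0 < n)%N) (hk : (0 < k)%N)
  (hk3 : k = 1 %[mod 3]) :
  \det (\matrix_(i < k, j < k) ((motzkin_bounded k (n + i + j))%:R : int))
  = (-1) ^+ (n * ((k + 1) %/ 3)) * (((2 * k + 4) %/ 3)%:R) ^+ (n - 1).
Proof.
have -> : \matrix_(i < k, j < k) ((motzkin_bounded k (n + i + j))%:R : int)
    = (Vm k)^T *m (tri k.+1) ^+ n *m Vm k.
  apply/matrixP => i j; rewrite [LHS]mxE motzkin_A Hankel_entry !mulmxE -!exprD.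
  by rewrite (addnC n i).
rewrite VJU trmx_mul !mulmxA -(mulmxA _ (Jm k)^T) -(mulmxA _ _ (Jm k)).
rewrite -[(Jm k)^T *m _ *m Jm k]/(Tm k n).
have hk' : (k %% 3 = 1)%N by [].
rewrite !det_mulmx det_tr detU mul1r mulr1.
case: n hn => [//|n] _.
have [q ek] : exists q, k = (q * 3 + 1)%N.
  by exists (k %/ 3)%N; rewrite {1}(divn_eq k 3) hk'.
subst k; rewrite detT.
have -> : ((q * 3 + 1 + 1) %/ 3 = q)%N by lia.
have -> : ((2 * (q * 3 + 1) + 4) %/ 3 = q * 2 + 2)%N by lia.
by rewrite subSS subn0 mulnC.
Qed.
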